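(* Up to multiplication by a positive integer, every basic weight of a basic system of type $C$ is one of the following (coordinates $\lambda_k=\langle\lambda,e_k\rangle$): (1) $(C_2,1,1)$: $(0,1)$; (2) $(C_2,1,2)$: $(1,1)$, $(-1,1)$; (3) $(C_2,2,1)$: $(1,0)$, $(0,-1)$; (4) $(C_2,2,2)$: $(1,-1)$; (5) $(C_3,2,2)$: $(1,0,1)$, $(0,-1,1)$; (6) $(C_3,2,3)$: $(1,-1,1)$; (7) $(C_3,3,2)$: $(1,0,-1)$; (8) $(C_4,3,3)$: $(1,0,-1,1)$.
   Context: $C_n$ is realized in $\mathbb R^n$ with orthonormal basis $e_1,\dots,e_n$ and standard inner product, simple roots $\alpha_k=e_k-e_{k+1}$ ($k<n$), $\alpha_n=2e_n$. Let $W$ be the Weyl group, $\alpha^\vee=2\alpha/\langle\alpha,\alpha\rangle$. A weight is integral if $\langle\lambda,\alpha^\vee\rangle\in\mathbb Z$ for all roots $\alpha$; $\overline\lambda$ is the dominant weight in $W\lambda$. For $I=\Delta\setminus\{\alpha_i\}$, $J=\Delta\setminus\{\alpha_j\}$, a basic weight of $(\Phi,i,j)$ is an integral $\lambda$ with $\langle\lambda,\alpha^\vee\rangle\in\mathbb Z_{>0}$ for all $\alpha\in I$ and $\{\alpha\in\Delta:\langle\overline\lambda,\alpha\rangle=0\}=J$; $(\Phi,i,j)$ is a basic system if it has a basic weight. *)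

(* Defs.v *)
From HB Require Import structures.
From mathcomp Require Import all_boot all_order all_algebra.
Set Implicit Arguments. Unset Strict Implicit. Unset Printing Implicit Defensive.
Import Order.TTheory GRing.Theory Num.Theory.
Local Open Scope ring_scope.

Section CnDefs.
Variable R : realFieldType.
Variable n : nat.

(* standard basis vector e_k (0-indexed: e k is e_{k+1} of the paper) *)
Definition ebase (k : nat) : 'rV[R]_n := \row_(l < n) (if val l == k then 1 else 0).

Definition dotv (u v : 'rV[R]_n) : R := \sum_(l < n) u 0 l * v 0 l.

Definition is_root (a : 'rV[R]_n) : Prop :=
  (exists (p q : nat) (s t : bool), (p < n)%N /\ (q < n)%N /\ p <> q /\
      a = (-1) ^+ s *: ebase p + (-1) ^+ t *: ebase q)
  \/ (exists (p : nat) (s : bool), (p < n)%N /\ a = (-1) ^+ s *: (2%:R *: ebase p)).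

Definition coroot (a : 'rV[R]_n) : 'rV[R]_n := (2%:R / dotv a a) *: a.

(* simple roots alpha_k, k = 1..n (paper indexing):
   alpha_k = e_k - e_{k+1} for k < n, alpha_n = 2 e_n *)
Definition simple_root (k : nat) : 'rV[R]_n :=
  if (k < n)%N then ebase k.-1 - ebase k else 2%:R *: ebase k.-1.

Definition is_int (x : R) : Prop := exists z : int, x = z%:~R.
Definition is_posint (x : R) : Prop := exists m : nat, (0 < m)%N /\ x = m%:R.

Definition integral (l : 'rV[R]_n) : Prop :=
  forall a, is_root a -> is_int (dotv l (coroot a)).

Definition reflect_root (a x : 'rV[R]_n) : 'rV[R]_n := x - dotv x (coroot a) *: a.

(* W-orbit: W is the group generated by the reflections s_a, a a root
   (each s_a is an involution, so W = finite products of reflections). *)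
Inductive in_orbit (l : 'rV[R]_n) : 'rV[R]_n -> Prop :=
| orbit_refl : in_orbit l l
| orbit_step : forall a x, is_root a -> in_orbit l x -> in_orbit l (reflect_root a x).

Definition dominant (m : 'rV[R]_n) : Prop :=
  forall k, (1 <= k <= n)%N -> 0 <= dotv m (simple_root k).

(* basic weight of (C_n, i, j), with I = Delta \ {alpha_i}, J = Delta \ {alpha_j}.
   \bar l is the (unique) dominant element of W l. *)
Definition basic_weight (i j : nat) (l : 'rV[R]_n) : Prop :=
  integral l /\
  (forall k, (1 <= k <= n)%N -> k <> i -> is_posint (dotv l (coroot (simple_root k)))) /\
  (exists m, in_orbit l m /\ dominant m /\
     forall k, (1 <= k <= n)%N -> (dotv m (simple_root k) = 0 <-> k <> j)).

Definition vec (s : seq R) : 'rV[R]_n := \row_(l < n) nth 0 s l.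

Definition listed (i j : nat) (s : seq R) : Prop :=
  [/\ n = 2%N, i = 1%N, j = 1%N & s = [:: 0; 1]]
  \/ ([/\ n = 2%N, i = 1%N & j = 2%N] /\ (s = [:: 1; 1] \/ s = [:: -1; 1]))
  \/ ([/\ n = 2%N, i = 2%N & j = 1%N] /\ (s = [:: 1; 0] \/ s = [:: 0; -1]))
  \/ [/\ n = 2%N, i = 2%N, j = 2%N & s = [:: 1; -1]]
  \/ ([/\ n = 3%N, i = 2%N & j = 2%N] /\ (s = [:: 1; 0; 1] \/ s = [:: 0; -1; 1]))
  \/ [/\ n = 3%N, i = 2%N, j = 3%N & s = [:: 1; -1; 1]]
  \/ [/\ n = 3%N, i = 3%N, j = 2%N & s = [:: 1; 0; -1]]
  \/ [/\ n = 4%N, i = 3%N, j = 3%N & s = [:: 1; 0; -1; 1]].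

End CnDefs.

(* Main.v *)
Require Import Defs.
From HB Require Import structures.
From mathcomp Require Import all_boot all_order all_algebra perm.
From mathcomp Require Import ring lra zify.
Set Implicit Arguments. Unset Strict Implicit. Unset Printing Implicit Defensive.
Import Order.TTheory GRing.Theory Num.Theory.
Local Open Scope ring_scope.

Section S.
Variable R : realFieldType.
Variable n : nat.
Local Notation e := (ebase R n).
Implicit Types u v w x : 'rV[R]_n.

Lemma e_entry (p : nat) (k : 'I_n) : e p 0 k = ((k : nat) == p)%:R.
Proof. by rewrite mxE; case: eqP. Qed.

Lemma dot_e u (k : 'I_n) : dotv u (e k) = u 0 k.
Proof.
rewrite /dotv (bigD1 k) //= big1 => [|p hp]; rewrite e_entry ?eqxx ?mulr1 ?addr0 //.
by rewrite (_ : (p : nat) == k = false) ?mulr0 //; apply/negbTE.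
Qed.

Lemma dotvC u v : dotv u v = dotv v u.
Proof. by apply: eq_bigr => k _; rewrite mulrC. Qed.

Lemma dotvDr u v w : dotv u (v + w) = dotv u v + dotv u w.
Proof. by rewrite /dotv -big_split; apply: eq_bigr => k _; rewrite mxE mulrDr. Qed.

Lemma dotvBr u v w : dotv u (v - w) = dotv u v - dotv u w.
Proof. by rewrite /dotv -sumrB; apply: eq_bigr => k _; rewrite !mxE mulrBr. Qed.

Lemma dotvZr u c v : dotv u (c *: v) = c * dotv u v.
Proof. by rewrite /dotv mulr_sumr; apply: eq_bigr => k _; rewrite mxE mulrCA. Qed.

Lemma dotvDl u v w : dotv (v + w) u = dotv v u + dotv w u.
Proof. by rewrite dotvC dotvDr !(dotvC u). Qed.
Lemma dotvBl u v w : dotv (v - w) u = dotv v u - dotv w u.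
Proof. by rewrite dotvC dotvBr !(dotvC u). Qed.
Lemma dotvZl u c v : dotv (c *: v) u = c * dotv v u.
Proof. by rewrite dotvC dotvZr dotvC. Qed.

Lemma ee p q : (p < n)%N -> dotv (e p) (e q) = (p == q)%:R.
Proof. by move=> hp; rewrite dotvC; have /= -> := dot_e (e q) (Ordinal hp); rewrite e_entry. Qed.

Lemma dot_en u p (hp : (p < n)%N) : dotv u (e p) = u 0 (Ordinal hp).
Proof. exact: (dot_e u (Ordinal hp)). Qed.


Lemma sr_lt k : (0 < k < n)%N -> simple_root R n k = e k.-1 - e k.
Proof. by rewrite /simple_root; case/andP => _ ->. Qed.
Lemma sr_n : simple_root R n n = 2%:R *: e n.-1.
Proof. by rewrite /simple_root ltnn. Qed.

Lemma coroot_sr k : (0 < k < n)%N -> coroot (simple_root R n k) = simple_root R n k.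
Proof.
move=> hk; rewrite sr_lt //; case/andP: hk => k0 kn.
have k1n : (k.-1 < n)%N by lia.
have d : dotv (e k.-1 - e k) (e k.-1 - e k) = 2%:R.
  have f1 : (k.-1 == k) = false by lia.
  have f2 : (k == k.-1) = false by lia.
  rewrite dotvBl !dotvBr !ee // !eqxx f1 f2 /=; lra.
by rewrite /coroot d divff ?scale1r // pnatr_eq0.
Qed.

Lemma coroot_srn : (0 < n)%N -> coroot (simple_root R n n) = e n.-1.
Proof.
move=> n0; rewrite sr_n /coroot dotvZl dotvZr ee ?eqxx; last lia.
rewrite scalerA (_ : _ * 2%:R = 1) ?scale1r //.
rewrite mulr1; field => //.
Qed.


Lemma sign2 (s : bool) : ((-1) ^+ s * (-1) ^+ s : R) = 1.
Proof. by case: s; rewrite ?expr0 ?expr1 ?mulr1 ?mulrNN ?mulr1. Qed.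

Lemma sgn (s : bool) : (-1) ^+ s = 1 :> R \/ (-1) ^+ s = -1 :> R.
Proof. by case: s; [right|left]; rewrite ?expr0 ?expr1. Qed.

Lemma abs_pm (y z : R) : y = z \/ y = - z -> `|y| = `|z|.
Proof. by case=> ->; rewrite ?normrN. Qed.

Lemma refl_entry x (c : R) r k : (x - c *: r) 0 k = x 0 k - c * r 0 k.
Proof. by rewrite !mxE. Qed.

Lemma refl_abs b x : is_root b -> exists h : 'I_n -> 'I_n, injective h /\
  forall k, `|reflect_root b x 0 k| = `|x 0 (h k)|.
Proof.
case => [[p [q [s [t [hp [hq [hpq ->]]]]]]] | [p [s [hp ->]]]].
- set r := _ + _.
  have f1 : (p == q) = false by lia.
  have f2 : (q == p) = false by lia.
  have ha k : r 0 k = (-1) ^+ s * ((k : nat) == p)%:R + (-1) ^+ t * ((k : nat) == q)%:R.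
    by rewrite !mxE; case: (nat_of_ord k == p); try case: (nat_of_ord k == q).
  have daa : dotv r r = 2%:R.
    rewrite /r dotvDl !dotvDr !dotvZl !dotvZr !ee // !eqxx.
    rewrite f1 f2;
    by rewrite !mulr0 !mulr1 !addr0 !add0r !sign2.
  have ca : coroot r = r by rewrite /coroot daa divff ?scale1r // pnatr_eq0.
  have dx : dotv x r = (-1) ^+ s * x 0 (Ordinal hp) + (-1) ^+ t * x 0 (Ordinal hq).
    by rewrite /r dotvDr !dotvZr !dot_en.
  exists (tperm (Ordinal hp) (Ordinal hq)); split; first exact: perm_inj.
  move=> k; rewrite /reflect_root ca refl_entry ha dx.
  case: (eqVneq k (Ordinal hp)) => [-> | kp].
    rewrite tpermL /= eqxx f1; apply: abs_pm.
    by case: (sgn s) => ->; case: (sgn t) => ->; rewrite /=; first [left; ring | right; ring].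
  case: (eqVneq k (Ordinal hq)) => [-> | kq].
    rewrite tpermR /= eqxx f2; apply: abs_pm.
    by case: (sgn s) => ->; case: (sgn t) => ->; rewrite /=; first [left; ring | right; ring].
  have kp' : Ordinal hp != k by rewrite eq_sym.
  have kq' : Ordinal hq != k by rewrite eq_sym.
  rewrite tpermD //.
  have g1 : ((k : nat) == p) = false.
    by apply/negbTE; apply: contra kp => /eqP h; apply/eqP; apply: val_inj; exact: h.
  have g2 : ((k : nat) == q) = false.
    by apply/negbTE; apply: contra kq => /eqP h; apply/eqP; apply: val_inj; exact: h.
  by rewrite g1 g2 !mulr0 addr0 mulr0 subr0.
- set r := _ *: _.
  have ha k : r 0 k = (-1) ^+ s * (2%:R * ((k : nat) == p)%:R).
    by rewrite !mxE; case: (nat_of_ord k == p); try case: (nat_of_ord k == q).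
  have daa : dotv r r = 4%:R.
    rewrite /r !dotvZl !dotvZr !ee // !eqxx /=.
    by case: (sgn s) => ->; ring.
  have dx : dotv x r = (-1) ^+ s * (2%:R * x 0 (Ordinal hp)).
    by rewrite /r !dotvZr !dot_en.
  exists id; split => // k.
  rewrite /reflect_root /coroot dotvZr dx daa refl_entry ha.
  case: (eqVneq k (Ordinal hp)) => [-> | kp].
    rewrite /= eqxx; apply: abs_pm; right.
    by case: (sgn s) => ->; rewrite /=; field.
  have g1 : ((k : nat) == p) = false.
    by apply/negbTE; apply: contra kp => /eqP h; apply/eqP; apply: val_inj; exact: h.
  by rewrite g1 !mulr0 subr0.
Qed.

Lemma orbit_abs l x : Defs.in_orbit l x -> forall f : R -> nat,
  \sum_(k < n) f `|x 0 k| = \sum_(k < n) f `|l 0 k|.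
Proof.
elim => [//| a y ha _ IH] f; rewrite -IH.
have [h [hi hh]] := refl_abs y ha.
rewrite [in RHS](reindex_inj hi) /=.
by apply: eq_bigr => k _; rewrite hh.
Qed.


Lemma dom_shape j m : (1 <= j <= n)%N -> dominant m ->
  (forall k, (1 <= k <= n)%N -> (dotv m (simple_root R n k) = 0 <-> k <> j)) ->
  exists a : R, 0 < a /\ forall p (hp : (p < n)%N), m 0 (Ordinal hp) = if (p < j)%N then a else 0.
Proof.
move=> hj hdom hz.
set M := fun p => dotv m (e p).
have hM p (hp : (p < n)%N) : m 0 (Ordinal hp) = M p by rewrite /M dot_en.
have srk k : (k.+1 < n)%N -> dotv m (simple_root R n k.+1) = M k - M k.+1.
  by move=> hk; rewrite sr_lt ?dotvBr //; apply/andP; split.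
have srn : dotv m (simple_root R n n) = 2%:R * M n.-1 by rewrite sr_n dotvZr.
have step k : (k.+1 < n)%N -> k.+1 <> j -> M k = M k.+1.
  move=> hk hkj; have /(hz _) h : (1 <= k.+1 <= n)%N by lia.
  by apply/eqP; rewrite -subr_eq0 -srk // ; apply/eqP/h.
have up p : (p < j)%N -> M p = M 0.
  elim: p => [//|p IH] hp; rewrite -step ?IH //; lia.
have down d : forall p, (j <= p)%N -> (p + d = n.-1)%N -> M p = M n.-1.
  elim: d => [|d IH] p hp hpd; first by rewrite -hpd addn0.
  rewrite step; [apply: IH|..]; lia.
case: (ltngtP j n) => hjn.
- have h1 : (1 <= n <= n)%N by lia.
  have hMn : M n.-1 = 0.
    have H : dotv m (simple_root R n n) = 0 by apply/(hz _ h1); lia.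
    by move: H; rewrite srn => /eqP; rewrite mulf_eq0 pnatr_eq0 /= => /eqP.
  exists (M 0); split.
    have h2 : (1 <= j <= n)%N by lia.
    have hne : dotv m (simple_root R n j) != 0.
      by apply/eqP => H; exact: (proj1 (hz j h2) H erefl).
    have hge := hdom j h2.
    have ej : j.-1.+1 = j by lia.
    have key := srk j.-1 ltac:(lia); rewrite ej in key.
    have Mj : M j = 0 by rewrite (down (n.-1 - j)%N j) //; lia.
    have M1 : M j.-1 = M 0 := up j.-1 ltac:(lia).
    rewrite key Mj M1 subr0 in hne hge.
    by rewrite lt_def hne hge.
  move=> p hp; rewrite hM; case: ifP => hpj; first by rewrite up.
  move/negbT: hpj; rewrite -leqNgt => hpj.
  rewrite (down (n.-1 - p)%N p) ?hMn //; lia.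
- lia.
- have h1 : (1 <= n <= n)%N by lia.
  exists (M 0); split.
    have hne : dotv m (simple_root R n n) != 0.
      by apply/eqP => H; exact: (proj1 (hz n h1) H (esym hjn)).
    have hge := hdom n h1.
    rewrite srn in hne hge.
    rewrite -(up n.-1); last lia.
    rewrite lt_def; apply/andP; split.
      by apply: contra hne => /eqP ->; rewrite mulr0.
    by rewrite pmulr_rge0 ?ltr0n in hge.
  move=> p hp; rewrite hM; have -> : (p < j)%N by lia.
  apply: up; lia.
Qed.


Lemma coroot_2e p : (p < n)%N -> coroot (2%:R *: e p) = e p.
Proof.
move=> hp; rewrite /coroot dotvZl dotvZr ee ?eqxx //.
rewrite scalerA (_ : _ * 2%:R = 1) ?scale1r //.
rewrite mulr1; field => //.
Qed.

Lemma root_2e p : (p < n)%N -> is_root (2%:R *: e p).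
Proof. by move=> hp; right; exists p, false; split => //; rewrite expr0 scale1r. Qed.

End S.

Section Core.
Variable R : realFieldType.

Definition u (a x : R) : R := if x == 0 then 0 else if x == a then 1 else -1.

Definition vals (a x : R) := x = 0 \/ x = a \/ x = -a.

Section V.
Variable a : R.
Hypothesis ha : 0 < a.
Lemma ga y : vals a y -> 0 < a - y -> y = 0 \/ y = -a.
Proof. have h0 := ha.  by case=> [->|[->|->]] h; [left|exfalso; lra|right]. Qed.
Lemma g0 y : vals a y -> 0 < 0 - y -> y = -a.
Proof. have h0 := ha.  by case=> [->|[->|->]] h //; exfalso; lra. Qed.
Lemma gn y : vals a y -> 0 < -a - y -> False.
Proof. have h0 := ha.  by case=> [->|[->|->]] h; lra. Qed.
Lemma gp y : vals a y -> 0 < y -> y = a.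
Proof. have h0 := ha.  by case=> [->|[->|->]] h //; lra. Qed.
Lemma gtA y : vals a y -> 0 < y - a -> False.
Proof. have h0 := ha.  by case=> [->|[->|->]] h; lra. Qed.
Lemma g2 x y : vals a x -> vals a y -> 0 < x - y ->
  [/\ x = a & y = 0] \/ [/\ x = a & y = -a] \/ [/\ x = 0 & y = -a].
Proof.
case=> [->|[->|->]] hy h.
- by right; right; split => //; apply: g0.
- by case: (ga hy h) => ->; [left|right;left].
- by case: (gn hy h).
Qed.
Lemma g3 x y z : vals a x -> vals a y -> vals a z -> 0 < x - y -> 0 < y - z ->
  [/\ x = a, y = 0 & z = -a].
Proof.
move=> hx hy hz h1; case: (g2 hx hy h1) => [[-> ->]|[[-> ->]|[-> ->]]] h2.
- by rewrite (g0 hz h2).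
- by case: (gn hz h2).
- by case: (gn hz h2).
Qed.
End V.

Ltac pick := first [ by split | by split; [split|left] | by split; [split|right] ].
Ltac solve_listed := rewrite /listed; repeat (first [ left; pick | right ]); pick.
Ltac dv := case=> [->|[->|->]].

Lemma core (a : R) (L : nat -> R) n i j :
 0 < a -> (2 <= n)%N -> (1 <= i <= n)%N ->
 (forall k, (k < n)%N -> vals a (L k)) ->
 j = (\sum_(k < n) ((L k != 0%R) : nat))%N ->
 (forall k, (k.+1 < n)%N -> k.+1 <> i -> 0 < L k - L k.+1) ->
 (n <> i -> 0 < L n.-1) ->
 listed n i j [seq u a (L k) | k <- iota 0 n].
Proof.
move=> ha hn hi hv -> hd he.
have ha0 : (a == 0) = false by rewrite gt_eqF.
have hna0 : (-a == 0) = false by rewrite oppr_eq0 gt_eqF.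
have hnaa : (-a == a) = false by apply/negbTE/eqP => h; lra.
have hi3 : (i <= 3)%N.
  rewrite leqNgt; apply/negP => hi4.
  have [_ h1 _] := g3 ha (hv 0%N ltac:(lia)) (hv 1%N ltac:(lia)) (hv 2%N ltac:(lia))
     (hd 0%N ltac:(lia) ltac:(lia)) (hd 1%N ltac:(lia) ltac:(lia)).
  have [h2 _ _] := g3 ha (hv 1%N ltac:(lia)) (hv 2%N ltac:(lia)) (hv 3%N ltac:(lia))
     (hd 1%N ltac:(lia) ltac:(lia)) (hd 2%N ltac:(lia) ltac:(lia)).
  by move: ha0; rewrite -h2 h1 eqxx.
have hni : (n <= i.+1)%N.
  rewrite leqNgt; apply/negP => hn2.
  have e1 := gp ha (hv n.-1 ltac:(lia)) (he ltac:(lia)).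
  have e2 := hd n.-2 ltac:(lia) ltac:(lia).
  rewrite (_ : n.-2.+1 = n.-1) ?e1 in e2; last lia.
  have H := gtA ha (hv n.-2 ltac:(lia)). apply: H. exact: e2.
have vv k : (k < n)%N -> vals a (L k) by apply: hv.
move: hd he vv; clear hv.
case: n hn hi hni => [|[|[|[|[|n]]]]] //= hn hi hni; try lia;
  case: i hi hi3 hni => [|[|[|[|i]]]] //= hi hi3 hni; try lia; move=> hd he vv.
- (* n=2 i=1 *)
  rewrite !big_ord_recr big_ord0 /= (gp ha (vv 1%N isT) (he ltac:(lia))).
  case: (vv 0%N isT) => [->|[->|->]]; rewrite /u ?eqxx ?ha0 ?hna0 ?hnaa /=; solve_listed.
- (* n=2 i=2 *)
  rewrite !big_ord_recr big_ord0 /=.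
  case: (g2 ha (vv 0%N isT) (vv 1%N isT) (hd 0%N isT ltac:(lia))) => [[-> ->]|[[-> ->]|[-> ->]]];
  rewrite /u ?eqxx ?ha0 ?hna0 ?hnaa /=; solve_listed.
- (* n=3 i=2 *)
  rewrite !big_ord_recr big_ord0 /= (gp ha (vv 2%N isT) (he ltac:(lia))).
  case: (g2 ha (vv 0%N isT) (vv 1%N isT) (hd 0%N isT ltac:(lia))) => [[-> ->]|[[-> ->]|[-> ->]]];
  rewrite /u ?eqxx ?ha0 ?hna0 ?hnaa /=; solve_listed.
- (* n=3 i=3 *)
  rewrite !big_ord_recr big_ord0 /=.
  case: (g3 ha (vv 0%N isT) (vv 1%N isT) (vv 2%N isT) (hd 0%N isT ltac:(lia)) (hd 1%N isT ltac:(lia))) => -> -> ->.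
  rewrite /u ?eqxx ?ha0 ?hna0 ?hnaa /=; solve_listed.
- (* n=4 i=3 *)
  rewrite !big_ord_recr big_ord0 /= (gp ha (vv 3%N isT) (he ltac:(lia))).
  case: (g3 ha (vv 0%N isT) (vv 1%N isT) (vv 2%N isT) (hd 0%N isT ltac:(lia)) (hd 1%N isT ltac:(lia))) => -> -> ->.
  rewrite /u ?eqxx ?ha0 ?hna0 ?hnaa /=; solve_listed.
Qed.
End Core.

Lemma cnt (n j : nat) : (\sum_(k < n) ((k < j)%N : nat) = minn j n)%N.
Proof.
elim: n => [|n IH]; first by rewrite big_ord0 minn0.
rewrite big_ord_recr /= IH; case: ltnP => h; lia.
Qed.

Lemma absvals (R : realFieldType) (a x : R) : 0 < a -> (`|x| == 0) || (`|x| == a) -> vals a x.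
Proof.
move=> ha /orP[/eqP|/eqP] h.
  by left; apply/eqP; rewrite -normr_eq0 h.
case: (lerP 0 x) => hx.
  by right; left; rewrite -h ger0_norm.
by right; right; rewrite -h ltr0_norm ?opprK.
Qed.

Theorem theorem5p9 (R : realFieldType) (n i j : nat) (l : 'rV[R]_n) :
  (2 <= n)%N -> (1 <= i <= n)%N -> (1 <= j <= n)%N ->
  basic_weight i j l ->
  exists (c : nat) (s : seq R), (0 < c)%N /\ listed n i j s /\ l = c%:R *: vec n s.
Proof.
move=> hn hi hj [hint [hpos [m [horb [hdom hz]]]]].
have [a [ha hm0]] := dom_shape hj hdom hz.
have hm (k : 'I_n) : m 0 k = if (k < j)%N then a else 0.
  have := hm0 k (ltn_ord k).
  by rewrite (_ : Ordinal (ltn_ord k) = k) //; apply: val_inj.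
have ha0 : (a == 0) = false by rewrite gt_eqF.
have hna0 : (-a == 0) = false by rewrite oppr_eq0 gt_eqF.
have hnaa : (-a == a) = false by apply/negbTE/eqP => h; lra.
have hinv := orbit_abs horb.
have hv (k : 'I_n) : vals a (l 0 k).
  have := hinv (fun x => ((x != 0) && (x != a) : nat)).
  rewrite big1 => [|p _]; last by rewrite hm; case: ifP => _;
    rewrite ?normr0 ?eqxx ?andbF ?gtr0_norm ?eqxx ?andbF.
  move/esym/eqP; rewrite sum_nat_eq0 => /forallP /(_ k) /=.
  rewrite eqb0 negb_and !negbK => h.
  exact: absvals.
have hvL k : (k < n)%N -> vals a (dotv l (ebase R n k)).
  by move=> hk; rewrite dot_en; apply: hv.
have hc : j = (\sum_(k < n) ((dotv l (ebase R n k) != 0%R) : nat))%N.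
  have := hinv (fun x => ((x != 0) : nat)).
  rewrite (eq_bigr (fun k : 'I_n => ((k < j)%N : nat))); last first.
    by move=> k _; rewrite hm; case: ifP => _; rewrite ?normr0 ?eqxx ?gtr0_norm // ha0.
  rewrite cnt (_ : minn j n = j); last lia.
  move=> ->; apply: eq_bigr => k _; by rewrite dot_e normr_eq0.
have hd k : (k.+1 < n)%N -> k.+1 <> i -> 0 < dotv l (ebase R n k) - dotv l (ebase R n k.+1).
  move=> hk hki.
  have [mm [mm0 hmm]] := hpos k.+1 ltac:(lia) hki.
  rewrite coroot_sr in hmm; last lia.
  rewrite sr_lt in hmm; last lia.
  by rewrite dotvBr /= in hmm; rewrite hmm ltr0n.
have he : n <> i -> 0 < dotv l (ebase R n n.-1).
  move=> hni.
  have [mm [mm0 hmm]] := hpos n ltac:(lia) hni.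
  rewrite /simple_root ltnn coroot_2e in hmm; last lia.
  by rewrite hmm ltr0n.
have hlist := core ha hn hi hvL hc hd he.
have [k hk] : exists k : 'I_n, l 0 k != 0.
  case: (boolP [exists k, l 0 k != 0]) => [/existsP //|]; rewrite negb_exists => /forallP H.
  move: hc; rewrite big1 => [|p _]; last by rewrite dot_e (negbTE (H p)).
  lia.
have hak : `|l 0 k| = a.
  case: (hv k) => h; first by rewrite h eqxx in hk.
  by case: h => ->; rewrite ?normrN gtr0_norm.
have [z hz'] : is_int (l 0 k).
  have := hint _ (@root_2e R _ _ (ltn_ord k)).
  by rewrite coroot_2e ?dot_e.
set c := `|z|%N.
have hac : a = c%:R by rewrite -hak hz' /c natr_absz intr_norm.
exists c, [seq u a (dotv l (ebase R n k)) | k <- iota 0 n]; split; last split => //.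
  by rewrite lt0n; apply/negP => /eqP c0; move: ha; rewrite hac c0 ltxx.
apply/rowP => p; rewrite !mxE (nth_map 0%N) ?size_iota // nth_iota // add0n dot_e -hac.
rewrite /u; case: (hv p) => [->|[->|->]]; rewrite ?eqxx ?ha0 ?hna0 ?hnaa ?mulr0 ?mulr1 //.
by rewrite mulrN1.
Qed.
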